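(* Let $1\le n_1\le n$ and let $([n_1],v,e),([n_1],u,g)$ be graphs. Extend both to size $n$ by $v_i=u_i=x_*$ for $n_1+1\le i\le n$ and $e_{ii'}=g_{ii'}=y_0$ whenever $\max\{i,i'\}\ge n_1+1$. Then $D_n(([n],v,e),([n],u,g))\le D_{n_1}(([n_1],v,e),([n_1],u,g))$.
   Context: $(\mathcal X,d_{\mathcal X})$, $(\mathcal Y,d_{\mathcal Y})$ are pseudometric spaces with $\mathrm{diam}(\mathcal X)\le C_{\mathcal X}$, $\mathrm{diam}(\mathcal Y)\le C_{\mathcal Y}$, $y_0\in\mathcal Y$ a distinguished ''no edge'' element, $p\ge1$, $C_2^p\ge C_{\mathcal X}^p+C_{\mathcal Y}^p$. A new point $x_*\notin\mathcal X$ is adjoined with $d_{\mathcal X}(x,x_* )=d_{\mathcal X}(x_*,x)=C_2$ for $x\in\mathcal X$, $d_{\mathcal X}(x_*,x_* )=0$. A graph $([n],v,e)$ has $v:[n]\to\mathcal X\cup\{x_*\}$ and symmetric $e:[n]^2\to\mathcal Y$ with $e_{ii}=y_0$; $S_n$ is the set of permutations of $[n]=\{1,\dots,n\}$. For two graphs of equal size $N\ge1$, $$D_N\big(([N],a,g),([N],b,h)\big)=N^{-1/p}\min_{\pi\in S_N}\Big[\sum_{i\in[N]}d_{\mathcal X}(a_i,b_{\pi(i)})^p+\frac{1}{2(N-1)}\sum_{(i,i')\in[N]^2}d_{\mathcal Y}(g_{ii'},h_{\pi(i)\pi(i')})^p\Big]^{1/p},$$ with $0/0:=0$. *)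

(* Defs.v *)
From mathcomp Require Import all_boot all_order all_algebra all_fingroup.
From mathcomp Require Import all_classical all_reals.
From mathcomp Require Import exp.
Set Implicit Arguments. Unset Strict Implicit. Unset Printing Implicit Defensive.
Import Order.TTheory GRing.Theory Num.Theory.
Local Open Scope ring_scope.

Section Defs.
Variable R : realType.

Definition is_pseudometric (T : Type) (d : T -> T -> R) : Prop :=
  (forall x, d x x = 0) /\ (forall x y, d x y = d y x) /\
  (forall x y z, d x z <= d x y + d y z).

(* X ∪ {x_*} is modelled by option X, with None = x_* *)
Definition dXs (X : Type) (dX : X -> X -> R) (C2 : R) (a b : option X) : R :=
  match a, b with
  | Some x, Some y => dX x y
  | None, None => 0
  | _, _ => C2
  end.

Definition is_graph (Y : Type) (y0 : Y) (N : nat) (e : 'I_N -> 'I_N -> Y) : Prop :=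
  (forall i j, e i j = e j i) /\ (forall i, e i i = y0).

(* the bracketed cost for a permutation pi (1/(2(N-1)) with 0^-1 = 0 in MathComp) *)
Definition Dcost (X Y : Type) (dX : X -> X -> R) (dY : Y -> Y -> R) (C2 p : R)
  (N : nat) (a b : 'I_N -> option X) (g h : 'I_N -> 'I_N -> Y) (pi : {perm 'I_N}) : R :=
  \sum_(i < N) (dXs dX C2 (a i) (b (pi i))) `^ p
  + (2 * (N.-1)%:R)^-1 *
    \sum_(i < N) \sum_(i' < N) (dY (g i i') (h (pi i) (pi i'))) `^ p.

Definition DN (X Y : Type) (dX : X -> X -> R) (dY : Y -> Y -> R) (C2 p : R)
  (N : nat) (a b : 'I_N -> option X) (g h : 'I_N -> 'I_N -> Y) : R :=
  (N%:R) `^ (- p^-1) *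
  (\big[Order.min/Dcost dX dY C2 p a b g h 1]_(pi : {perm 'I_N})
      Dcost dX dY C2 p a b g h pi) `^ (p^-1).

End Defs.

Definition ext_v (X : Type) (n1 n : nat) (v : 'I_n1 -> option X) (i : 'I_n) : option X :=
  match (insub (val i) : option 'I_n1) with
  | Some j => v j
  | None => None
  end.

Definition ext_e (Y : Type) (y0 : Y) (n1 n : nat) (e : 'I_n1 -> 'I_n1 -> Y)
  (i i' : 'I_n) : Y :=
  match (insub (val i) : option 'I_n1), (insub (val i') : option 'I_n1) with
  | Some j, Some j' => e j j'
  | _, _ => y0
  end.

(* Main.v *)
Require Import Defs.
From mathcomp Require Import all_boot all_order all_algebra all_fingroup.
From mathcomp Require Import all_classical all_reals.
From mathcomp Require Import exp.
Import Order.TTheory GRing.Theory Num.Theory.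
Local Open Scope ring_scope.

Lemma bigmin_le_seq (R : realType) (I : eqType) (s : seq I) (x0 : R) (F : I -> R) j :
  j \in s -> \big[Order.min/x0]_(i <- s) F i <= F j.
Proof.
elim: s => [//|a s IH]; rewrite inE big_cons => /orP[/eqP->|Hj].
  by rewrite ge_min lexx.
by rewrite ge_min IH ?orbT.
Qed.

Lemma bigmin_le (R : realType) (I : finType) (x0 : R) (F : I -> R) j :
  \big[Order.min/x0]_(i : I) F i <= F j.
Proof. by apply: bigmin_le_seq; rewrite mem_index_enum. Qed.

Lemma bigmin_ex (R : realType) (I : finType) (F : I -> R) j0 :
  exists j, \big[Order.min/F j0]_(i : I) F i = F j.
Proof.
apply: (big_ind (fun a => exists j, a = F j)); first by exists j0.
move=> a b [ja ->] [jb ->]; rewrite /Order.min; case: ifP => _.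
  by exists ja. by exists jb.
by move=> i _; exists i.
Qed.

Lemma sum_trunc (R : realType) (n1 n : nat) (T : nat -> R) :
  (n1 <= n)%N -> (forall k, (n1 <= k)%N -> T k = 0) ->
  \sum_(i < n) T i = \sum_(i < n1) T i.
Proof.
move=> hn hT; rewrite -!(big_mkord xpredT) (@big_cat_nat _ _ _ n1) // /=.
rewrite [X in _ + X = _]big_nat_cond [X in _ + X = _]big1 ?addr0 //.
by move=> k /andP[/andP[hk _] _]; exact: hT.
Qed.

Arguments sum_trunc {R n1 n T}.

Theorem lemmaC (R : realType) (X Y : Type) (dX : X -> X -> R) (dY : Y -> Y -> R)
  (CX CY C2 p : R) (y0 : Y)
  (hdX : is_pseudometric dX) (hdY : is_pseudometric dY)
  (hCX : 0 <= CX) (hCY : 0 <= CY)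
  (hdiamX : forall x x', dX x x' <= CX) (hdiamY : forall y y', dY y y' <= CY)
  (hp : 1 <= p) (hC2 : 0 <= C2) (hC2p : CX `^ p + CY `^ p <= C2 `^ p)
  (n1 n : nat) (hn1 : (1 <= n1)%N) (hn1n : (n1 <= n)%N)
  (v u : 'I_n1 -> option X) (e g : 'I_n1 -> 'I_n1 -> Y)
  (he : is_graph y0 e) (hg : is_graph y0 g) :
  DN dX dY C2 p (ext_v (n:=n) v) (ext_v (n:=n) u)
     (ext_e y0 (n:=n) e) (ext_e y0 (n:=n) g)
  <= DN dX dY C2 p v u e g.
Proof.
have p0 : p != 0 by apply/negP => /eqP p0; move: hp; rewrite p0 ler10.
have dYyy : dY y0 y0 = 0 by case: hdY.
rewrite /DN.
set Fn := Dcost dX dY C2 p _ _ _ _.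
set F1 := Dcost dX dY C2 p v u e g.
have [pi1 Hpi1] := @bigmin_ex _ _ F1 1%g.
rewrite Hpi1.
pose P k := match (insub k : option 'I_n1) with Some j => val (pi1 j) | None => k end.
pose piE (i : 'I_n) : 'I_n := match (insub (val i) : option 'I_n1) with
  | Some j => widen_ord hn1n (pi1 j) | None => i end.
have valE i : val (piE i) = P (val i) by rewrite /piE /P; by case: (insub (val i) : option 'I_n1).
have Plt k : (P k < n1)%N = (k < n1)%N.
  rewrite /P; case: insubP => [j hk _|/negbTE ->]; last by [].
  by rewrite hk ltn_ord.
have Pinj : injective P.
  move=> k k'; rewrite /P; case: insubP => [j hk hj|hk]; case: insubP => [j' hk' hj'|hk'].
  - by move/val_inj/perm_inj => ejj; rewrite -hj -hj' ejj.
  - by move=> e1; move: hk'; rewrite -e1 ltn_ord.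
  - by move=> e1; move: hk; rewrite e1 ltn_ord.
  - by [].
have piEinj : injective piE.
  by move=> i i' /(congr1 val); rewrite !valE => /Pinj /val_inj.
pose pE := perm piEinj.
pose V (w : 'I_n1 -> option X) k := match (insub k : option 'I_n1) with
  | Some j => w j | None => None end.
pose E (f : 'I_n1 -> 'I_n1 -> Y) k k' :=
  match (insub k : option 'I_n1), (insub k' : option 'I_n1) with
  | Some j, Some j' => f j j' | _, _ => y0 end.
have VK w (j : 'I_n1) : V w (val j) = w j by rewrite /V valK.
have EK f (j j' : 'I_n1) : E f (val j) (val j') = f j j' by rewrite /E !valK.
have PK (j : 'I_n1) : P (val j) = val (pi1 j) by rewrite /P valK.
have VN w k : (n1 <= k)%N -> V w k = None by move=> hk; rewrite /V insubN // -leqNgt.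
have EN1 f k k' : (n1 <= k)%N -> E f k k' = y0.
  by move=> hk; rewrite /E insubN // -leqNgt.
have EN2 f k k' : (n1 <= k')%N -> E f k k' = y0.
  move=> hk; rewrite /E (@insubN _ _ 'I_n1 k'); last by rewrite -leqNgt.
  by case: (insub k : option 'I_n1).
pose T k := dXs dX C2 (V v k) (V u (P k)) `^ p.
pose T2 k k' := dY (E e k k') (E g (P k) (P k')) `^ p.
have hT k : (n1 <= k)%N -> T k = 0.
  move=> hk; rewrite /T VN // VN; first by rewrite /= powR0.
  by rewrite leqNgt Plt -leqNgt.
have hT2 k k' : (n1 <= k)%N || (n1 <= k')%N -> T2 k k' = 0.
  case/orP => hk; rewrite /T2.
    rewrite EN1 // EN1 ?dYyy ?powR0 // leqNgt Plt -leqNgt //.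
  rewrite EN2 // EN2 ?dYyy ?powR0 // leqNgt Plt -leqNgt //.
set A := \sum_(i < n1) T i.
set B := \sum_(i < n1) \sum_(i' < n1) T2 i i'.
have F1E : F1 pi1 = A + (2 * (n1.-1)%:R)^-1 * B.
  rewrite /F1 /Dcost /A /B; congr (_ + _ * _).
    by apply: eq_bigr => j _; rewrite /T VK PK VK.
  apply: eq_bigr => j _; apply: eq_bigr => j' _.
  by rewrite /T2 EK !PK EK.
have FnE : Fn pE = A + (2 * (n.-1)%:R)^-1 * B.
  rewrite /Fn /Dcost /A /B; congr (_ + _ * _).
    rewrite (eq_bigr (fun i : 'I_n => T i)); last by move=> i _; rewrite permE /T -valE.
    by rewrite (sum_trunc hn1n hT).
  rewrite -(sum_trunc hn1n (T := fun i => \sum_(i' < n1) T2 i i')); last first.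
    by move=> k hk; apply: big1 => i' _; apply: hT2; rewrite hk.
  apply: eq_bigr => i _.
  rewrite -(sum_trunc hn1n (T := fun i' => T2 i i')); last first.
    by move=> k hk; apply: hT2; rewrite hk orbT.
  by apply: eq_bigr => i' _; rewrite !permE /T2 -!valE.
have B0 : 0 <= B by apply: sumr_ge0 => i _; apply: sumr_ge0 => i' _; apply: powR_ge0.
have key : Fn pE <= F1 pi1.
  rewrite FnE F1E lerD2l.
  case: (ltnP 1 n1) => h2.
    apply: ler_wpM2r => //.
    have h1 : 0 < 2 * (n1.-1)%:R :> R by rewrite mulr_gt0 // ltr0n -ltnS prednK.
    have h3 : 0 < 2 * (n.-1)%:R :> R.
      by rewrite mulr_gt0 // ltr0n -ltnS prednK ?(leq_trans h2) // (leq_trans hn1).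
    rewrite lef_pV2 ?posrE // ler_pM2l // ler_nat -!subn1 leq_sub2r //.
  have n11 : n1 = 1%N by apply/eqP; rewrite eqn_leq h2 hn1.
  have -> : B = 0.
    rewrite /B; apply: big1 => i _; apply: big1 => i' _.
    have hi : (val i < 1)%N by rewrite -n11 ltn_ord.
    have hi' : (val i' < 1)%N by rewrite -n11 ltn_ord.
    have ii : i = i' by apply: val_inj; move: hi hi'; rewrite !ltnS !leqn0 => /eqP-> /eqP->.
    rewrite /T2 -ii EK !PK EK; case: he => _ ->; case: hg => _ ->.
    by rewrite dYyy powR0.
  by rewrite !mulr0.
have Fn0 : 0 <= \big[Order.min/Fn 1%g]_pi Fn pi.
  have [pi ->] := @bigmin_ex _ _ Fn 1%g; rewrite /Fn /Dcost; apply: addr_ge0.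
    by apply: sumr_ge0 => *; apply: powR_ge0.
  apply: mulr_ge0; first by rewrite invr_ge0 mulr_ge0.
  by apply: sumr_ge0 => *; apply: sumr_ge0 => *; apply: powR_ge0.
have Fn1 : 0 <= Fn pE by apply: le_trans Fn0 (bigmin_le _ _ _ _ pE).
have pi0 : 0 <= p^-1 by rewrite invr_ge0 (le_trans ler01 hp).
apply: ler_pM.
- exact: powR_ge0.
- exact: powR_ge0.
- have n0 : 0 < n%:R :> R by rewrite ltr0n (leq_trans hn1 hn1n).
  have n10 : 0 < n1%:R :> R by rewrite ltr0n.
  rewrite !powRN lef_pV2 ?posrE ?powR_gt0 //.
  by apply: ge0_ler_powR; rewrite ?nnegrE ?ler0n ?ler_nat.
- apply: ge0_ler_powR; rewrite ?nnegrE //; first by apply: le_trans Fn1 key.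
  exact: le_trans (bigmin_le _ _ _ _ pE) key.
Qed.
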